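(* Let $f:H\to\mathbb{R}\cup\{+\infty\}$ be proper and lower semicontinuous, and let $(x^k)$ satisfy $\mathbf{H}_1$, $\mathbf{H}_2$, $\mathbf{H}_3$ with $\varepsilon_k=0$ for all $k$. Suppose $(x^k)$ $f$-converges to a point $x^*$ at which $f$ has the K\L{} property with desingularizing function $\varphi(t)=\frac{C}{\theta}t^\theta$, where $C>0$ and $\theta\in]0,1]$. (i) If $\theta=1$ and $\inf_{k}a_kb_{k+1}^2>0$, then there is $K$ with $f(x^K)=f(x^* )$ and $x^k=x^*$ for all $k\ge K$ (finite-time convergence). (ii) If $\theta\in[\frac12,1[$, $\sup_k b_k<+\infty$ and $\inf_k a_kb_{k+1}>0$, there exist $c>0$ and $k_0\in\mathbb{N}$ such that $f(x^k)-f(x^* )=O\Big(\exp\big(-c\sum_{n=k_0}^{k-1}b_{n+1}\big)\Big)$ and $\|x^*-x^k\|=O\Big(\exp\big(-\frac c2\sum_{n=k_0}^{k-2}b_{n+1}\big)\Big)$. (iii) If $\theta\in]0,\frac12[$, $\sup_k b_k<+\infty$ and $\inf_k a_kb_{k+1}>0$, there is $k_0\in\mathbb{N}$ such that $f(x^k)-f(x^* )=O\Big(\big(\sum_{n=k_0}^{k-1}b_{n+1}\big)^{-\frac{1}{1-2\theta}}\Big)$ and $\|x^*-x^k\|=O\Big(\big(\sum_{n=k_0}^{k-2}b_{n+1}\big)^{-\frac{\theta}{1-2\theta}}\Big)$.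
   Context: Subdifferential $\partial f$ (limiting Fréchet subdifferential), lazy slope $\|\partial f(x)\|_-=\inf_{p\in\partial f(x)}\|p\|$ ($+\infty$ if $\partial f(x)=\emptyset$), $f$-convergence: $x^k\to x$ strongly and $f(x^k)\to f(x)$. $f$ has the K\L{} property at $x^*$ with desingularizing $\varphi:[0,\eta[\to[0,\infty[$ if there is $\delta>0$ with $\varphi'(f(x)-f(x^* ))\|\partial f(x)\|_-\ge1$ for all $x$ with $\|x-x^*\|<\delta$ and $f(x^* )<f(x)<f(x^* )+\eta$. $\mathbf{H}_1$: $f(x^{k+1})+a_k\|x^{k+1}-x^k\|^2\le f(x^k)$, $a_k>0$. $\mathbf{H}_2$: $b_{k+1}\|\partial f(x^{k+1})\|_-\le\|x^{k+1}-x^k\|+\varepsilon_{k+1}$, $b_{k+1}>0$. $\mathbf{H}_3$: (i) $a_k\ge\underline a>0$; (ii) $(b_k)\notin\ell^1$; (iii) $\sup_{k\ge1}\frac1{a_kb_k}<\infty$; (iv) $(\varepsilon_k)\in\ell^1$. *)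

(* Defs.v *)
From Stdlib Require Import Reals Lra.
Open Scope R_scope.

Record HilbertSpace := {
  hcarrier :> Type;
  hzero : hcarrier;
  hadd : hcarrier -> hcarrier -> hcarrier;
  hopp : hcarrier -> hcarrier;
  hscal : R -> hcarrier -> hcarrier;
  hinner : hcarrier -> hcarrier -> R;
  hadd_assoc : forall x y z, hadd x (hadd y z) = hadd (hadd x y) z;
  hadd_comm : forall x y, hadd x y = hadd y x;
  hadd_zero : forall x, hadd x hzero = x;
  hadd_opp : forall x, hadd x (hopp x) = hzero;
  hscal_one : forall x, hscal 1 x = x;
  hscal_assoc : forall a b x, hscal a (hscal b x) = hscal (a * b) x;
  hscal_distr_l : forall a x y, hscal a (hadd x y) = hadd (hscal a x) (hscal a y);
  hscal_distr_r : forall a b x, hscal (a + b) x = hadd (hscal a x) (hscal b x);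
  hinner_sym : forall x y, hinner x y = hinner y x;
  hinner_add_l : forall x y z, hinner (hadd x y) z = hinner x z + hinner y z;
  hinner_scal_l : forall a x y, hinner (hscal a x) y = a * hinner x y;
  hinner_pos : forall x, 0 <= hinner x x;
  hinner_def : forall x, hinner x x = 0 -> x = hzero;
  hcomplete : forall u : nat -> hcarrier,
    (forall eps, eps > 0 -> exists N, forall m n, (m >= N)%nat -> (n >= N)%nat ->
        sqrt (hinner (hadd (u m) (hopp (u n))) (hadd (u m) (hopp (u n)))) < eps) ->
    exists l, forall eps, eps > 0 -> exists N, forall n, (n >= N)%nat ->
        sqrt (hinner (hadd (u n) (hopp l)) (hadd (u n) (hopp l))) < eps
}.

Arguments hadd {_}. Arguments hopp {_}. Arguments hscal {_}.
Arguments hinner {_}. Arguments hzero {_}.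

Definition hsub {H : HilbertSpace} (x y : H) : H := hadd x (hopp y).
Definition hnorm {H : HilbertSpace} (x : H) : R := sqrt (hinner x x).

Definition hcv {H : HilbertSpace} (u : nat -> H) (l : H) : Prop :=
  forall eps, eps > 0 -> exists N, forall n, (n >= N)%nat -> hnorm (hsub (u n) l) < eps.

Inductive ER := ERfin (r : R) | ERinf.

Definition ER_le (e1 e2 : ER) : Prop :=
  match e1, e2 with
  | _, ERinf => True
  | ERfin r1, ERfin r2 => r1 <= r2
  | ERinf, ERfin _ => False
  end.

Definition R_lt_ER (r : R) (e : ER) : Prop :=
  match e with ERfin s => r < s | ERinf => True end.

Definition ER_addR (e : ER) (r : R) : ER :=
  match e with ERfin s => ERfin (s + r) | ERinf => ERinf end.

Definition proper {H : HilbertSpace} (f : H -> ER) : Prop :=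
  exists x, f x <> ERinf.

Definition lsc {H : HilbertSpace} (f : H -> ER) : Prop :=
  forall x r, R_lt_ER r (f x) ->
    exists delta, delta > 0 /\ forall y, hnorm (hsub y x) < delta -> R_lt_ER r (f y).

(* Fréchet subdifferential: p ∈ ∂̂f(x) iff f(x) finite and
   liminf_{y -> x} (f y - f x - <p, y - x>)/||y - x|| >= 0 *)
Definition frechet_subdiff {H : HilbertSpace} (f : H -> ER) (x p : H) : Prop :=
  exists fx, f x = ERfin fx /\
  forall eps, eps > 0 -> exists delta, delta > 0 /\
    forall y, hnorm (hsub y x) < delta ->
      ER_le (ERfin (fx + hinner p (hsub y x) - eps * hnorm (hsub y x))) (f y).

(* limiting (Fréchet) subdifferential: p ∈ ∂f(x) iff there are x_n -> x with
   f(x_n) -> f(x), p_n ∈ ∂̂f(x_n), p_n -> p *)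
Definition subdiff {H : HilbertSpace} (f : H -> ER) (x p : H) : Prop :=
  exists fx, f x = ERfin fx /\
  exists (xs ps : nat -> H) (fxs : nat -> R),
    hcv xs x /\ hcv ps p /\ Un_cv fxs fx /\
    (forall n, f (xs n) = ERfin (fxs n)) /\
    (forall n, frechet_subdiff f (xs n) (ps n)).

(* lazy slope ||∂f(x)||_- = inf_{p ∈ ∂f(x)} ||p|| (+∞ if empty).
   slope_le f x r  <->  ||∂f(x)||_- <= r
   slope_ge f x r  <->  ||∂f(x)||_- >= r                               *)
Definition slope_le {H : HilbertSpace} (f : H -> ER) (x : H) (r : R) : Prop :=
  forall eps, eps > 0 -> exists p, subdiff f x p /\ hnorm p <= r + eps.

Definition slope_ge {H : HilbertSpace} (f : H -> ER) (x : H) (r : R) : Prop :=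
  forall p, subdiff f x p -> r <= hnorm p.

Definition f_converges {H : HilbertSpace} (f : H -> ER) (u : nat -> H) (xs : H) : Prop :=
  hcv u xs /\
  exists fs, f xs = ERfin fs /\
    forall eps, eps > 0 -> exists N, forall k, (k >= N)%nat ->
      exists v, f (u k) = ERfin v /\ Rabs (v - fs) < eps.

Definition KL_property {H : HilbertSpace} (f : H -> ER) (xs : H)
    (phi : R -> R) (eta : R) : Prop :=
  exists fs, f xs = ERfin fs /\
  exists delta, delta > 0 /\
    forall x v, hnorm (hsub x xs) < delta -> f x = ERfin v ->
      fs < v -> v < fs + eta ->
      exists d, derivable_pt_lim phi (v - fs) d /\
        forall p, subdiff f x p -> 1 <= d * hnorm p.

Definition phi_pow (C theta : R) (t : R) : R :=
  if Rle_dec t 0 then 0 else C / theta * Rpower t theta.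

(* rsum u m n = sum_{i=m}^{n-1} u i  (0 if n <= m) *)
Fixpoint rsum (u : nat -> R) (m n : nat) : R :=
  match n with
  | O => 0
  | S n' => if Nat.leb m n' then rsum u m n' + u n' else 0
  end.

(* Main.v *)
Require Import Defs.
From Stdlib Require Import Reals Lra Psatz Lia ZArith Classical.
Open Scope R_scope.

Lemma hadd_zero_l (H : HilbertSpace) (x : H) : hadd hzero x = x.
Proof. rewrite hadd_comm; apply hadd_zero. Qed.

Lemma hopp_add (H : HilbertSpace) (x : H) : hadd (hopp x) x = hzero.
Proof. rewrite hadd_comm; apply hadd_opp. Qed.

Lemma hadd_cancel (H : HilbertSpace) (x y z : H) : hadd x y = hadd x z -> y = z.
Proof.
  intro E. rewrite <- (hadd_zero_l H y), <- (hadd_zero_l H z).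
  rewrite <- (hopp_add H x), <- !hadd_assoc, E. reflexivity.
Qed.

Lemma hscal0 (H : HilbertSpace) (x : H) : hscal 0 x = hzero.
Proof.
  apply (hadd_cancel H (hscal 0 x)). rewrite hadd_zero, <- (hscal_distr_r H 0 0 x).
  now rewrite Rplus_0_r.
Qed.

Lemma hopp_scal (H : HilbertSpace) (x : H) : hopp x = hscal (-1) x.
Proof.
  apply (hadd_cancel H x). rewrite hadd_opp.
  rewrite <- (hscal_one H x) at 1. rewrite <- hscal_distr_r.
  replace (1 + -1) with 0 by ring. now rewrite hscal0.
Qed.

Lemma inner_zero_l (H : HilbertSpace) (y : H) : hinner hzero y = 0.
Proof. rewrite <- (hscal0 H y), hinner_scal_l. ring. Qed.

Lemma inner_add_r (H : HilbertSpace) (x y z : H) : hinner x (hadd y z) = hinner x y + hinner x z.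
Proof. rewrite hinner_sym, hinner_add_l, (hinner_sym H y), (hinner_sym H z). ring. Qed.

Lemma inner_scal_r (H : HilbertSpace) a (x y : H) : hinner x (hscal a y) = a * hinner x y.
Proof. rewrite hinner_sym, hinner_scal_l, hinner_sym. ring. Qed.

Lemma hopp_hsub (H : HilbertSpace) (x y : H) : hopp (hsub x y) = hsub y x.
Proof.
  unfold hsub. rewrite !hopp_scal, hscal_distr_l, hscal_assoc.
  replace (-1 * -1) with 1 by ring. rewrite hscal_one. apply hadd_comm.
Qed.

Lemma hnorm_opp (H : HilbertSpace) (v : H) : hnorm (hopp v) = hnorm v.
Proof.
  unfold hnorm. rewrite hopp_scal, hinner_scal_l, inner_scal_r. f_equal. ring.
Qed.

Lemma hnorm_sub_sym (H : HilbertSpace) (x y : H) : hnorm (hsub x y) = hnorm (hsub y x).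
Proof. rewrite <- hopp_hsub. apply hnorm_opp. Qed.

Lemma hsub_chain (H : HilbertSpace) (x y z : H) : hsub x z = hadd (hsub x y) (hsub y z).
Proof.
  unfold hsub. rewrite <- hadd_assoc. f_equal.
  rewrite hadd_assoc, hopp_add, hadd_zero_l. reflexivity.
Qed.

Lemma hsub_zero (H : HilbertSpace) (x y : H) : hsub x y = hzero -> x = y.
Proof.
  unfold hsub. intro E. rewrite <- (hadd_zero H x), <- (hopp_add H y), hadd_assoc, E.
  apply hadd_zero_l.
Qed.

Lemma hsub_self (H : HilbertSpace) (x : H) : hsub x x = hzero.
Proof. apply hadd_opp. Qed.

Lemma hnorm_nonneg (H : HilbertSpace) (v : H) : 0 <= hnorm v.
Proof. apply sqrt_pos. Qed.

Lemma hnorm_hzero (H : HilbertSpace) : hnorm (@hzero H) = 0.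
Proof. unfold hnorm. rewrite inner_zero_l. apply sqrt_0. Qed.

Lemma hnorm_eq0 (H : HilbertSpace) (v : H) : hnorm v = 0 -> v = hzero.
Proof. unfold hnorm. intro E. apply hinner_def. apply sqrt_eq_0; auto. apply hinner_pos. Qed.

Lemma hnorm_sq (H : HilbertSpace) (v : H) : hnorm v * hnorm v = hinner v v.
Proof. unfold hnorm. apply sqrt_sqrt. apply hinner_pos. Qed.

Lemma cauchy_schwarz (H : HilbertSpace) (u v : H) :
  hinner u v * hinner u v <= hinner u u * hinner v v.
Proof.
  assert (Q : forall t, 0 <= hinner u u + 2 * t * hinner u v + t * t * hinner v v).
  { intro t. pose proof (hinner_pos H (hadd u (hscal t v))) as P.
    rewrite hinner_add_l, !inner_add_r, !hinner_scal_l, !inner_scal_r in P.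
    rewrite (hinner_sym H v u) in P. nra. }
  pose proof (hinner_pos H v) as Pv. pose proof (hinner_pos H u) as Pu.
  destruct (Req_dec (hinner v v) 0) as [Z|Z].
  - apply hinner_def in Z.
    rewrite Z, (hinner_sym H u hzero), !inner_zero_l. lra.
  - specialize (Q (- hinner u v / hinner v v)).
    assert (0 < hinner v v) by lra.
    apply Rmult_le_compat_r with (r := hinner v v) in Q; [|lra].
    field_simplify in Q; [|lra]. nra.
Qed.

Lemma hnorm_triangle (H : HilbertSpace) (u v : H) : hnorm (hadd u v) <= hnorm u + hnorm v.
Proof.
  pose proof (hnorm_nonneg H u). pose proof (hnorm_nonneg H v).
  pose proof (hnorm_nonneg H (hadd u v)).
  pose proof (hnorm_sq H u). pose proof (hnorm_sq H v). pose proof (hnorm_sq H (hadd u v)).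
  pose proof (cauchy_schwarz H u v) as CS.
  rewrite <- (hnorm_sq H u), <- (hnorm_sq H v) in CS.
  assert (E : hinner (hadd u v) (hadd u v) = hinner u u + 2 * hinner u v + hinner v v).
  { rewrite hinner_add_l, !inner_add_r, (hinner_sym H v u). ring. }
  assert (hinner u v <= hnorm u * hnorm v).
  { destruct (Rle_dec (hinner u v) (hnorm u * hnorm v)) as [|N]; auto.
    assert (0 <= hnorm u * hnorm v) by (apply Rmult_le_pos; auto).
    assert (hnorm u * hnorm v < hinner u v) by lra.
    assert ((hnorm u * hnorm v) * (hnorm u * hnorm v) < hinner u v * hinner u v).
    { apply Rle_lt_trans with ((hnorm u * hnorm v) * hinner u v).
      apply Rmult_le_compat_l; lra. apply Rmult_lt_compat_r; lra. }
    lra. }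
  rewrite E in *. nra.
Qed.

Lemma hdist_triangle (H : HilbertSpace) (a b c : H) :
  hnorm (hsub a c) <= hnorm (hsub a b) + hnorm (hsub b c).
Proof. rewrite (hsub_chain H a b c). apply hnorm_triangle. Qed.

Lemma exp_le (x y : R) : x <= y -> exp x <= exp y.
Proof. intro h. destruct (Req_dec x y) as [->|n]; [lra|]. left; apply exp_increasing; lra. Qed.

Lemma ln_le' (x y : R) : 0 < x -> x <= y -> ln x <= ln y.
Proof. intros h1 h2. destruct (Req_dec x y) as [->|n]; [lra|]. left; apply ln_increasing; lra. Qed.

Lemma ln_le0 (x : R) : 0 < x -> x <= 1 -> ln x <= 0.
Proof. intros. rewrite <- ln_1. apply ln_le'; lra. Qed.

Lemma ln_le_sub1 (x : R) : 0 < x -> ln x <= x - 1.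
Proof. intro h. pose proof (exp_ineq1_le (ln x)). rewrite exp_ln in H; lra. Qed.

Lemma Rpower_pos' (x y : R) : 0 < Rpower x y.
Proof. apply exp_pos. Qed.

Lemma Rpower_exp_anti (r p q : R) : 0 < r -> r <= 1 -> q <= p -> Rpower r p <= Rpower r q.
Proof.
  intros. unfold Rpower. apply exp_le. pose proof (ln_le0 r H H0). nra.
Qed.

Lemma Rpower_base_neg (x y e : R) : 0 < y -> y <= x -> e <= 0 -> Rpower x e <= Rpower y e.
Proof.
  intros. unfold Rpower. apply exp_le. pose proof (ln_le' y x H H0). nra.
Qed.

Lemma Rpower_base_pos (x y e : R) : 0 < y -> y <= x -> 0 <= e -> Rpower y e <= Rpower x e.
Proof.
  intros. unfold Rpower. apply exp_le. pose proof (ln_le' y x H H0). nra.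
Qed.

Lemma phi_pow_pos (C th t : R) : 0 < t -> phi_pow C th t = C / th * Rpower t th.
Proof. intro h. unfold phi_pow. destruct (Rle_dec t 0); lra. Qed.

Lemma phi_deriv_id (C th r d : R) : 0 < r ->
  derivable_pt_lim (phi_pow C th) r d -> d = C / th * (th * Rpower r (th - 1)).
Proof.
  intros hr hd.
  pose (g := fun t => C / th * Rpower t th).
  assert (hg : derivable_pt_lim g r (C / th * (th * Rpower r (th - 1)))).
  { apply (derivable_pt_lim_scal (fun t => Rpower t th) (C/th) r).
    apply derivable_pt_lim_power; auto. }
  assert (hp : derivable_pt_lim (phi_pow C th) r (C / th * (th * Rpower r (th - 1)))).
  { intros eps heps. destruct (hg eps heps) as [del hdel].
    assert (hm : 0 < Rmin del r) by (apply Rmin_pos; [apply cond_pos|auto]).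
    exists (mkposreal _ hm). intros h hh0 hh. simpl in hh.
    assert (Rabs h < del) by (eapply Rlt_le_trans; [apply hh|apply Rmin_l]).
    assert (Rabs h < r) by (eapply Rlt_le_trans; [apply hh|apply Rmin_r]).
    apply Rabs_def2 in H0.
    rewrite !phi_pow_pos; try lra.
    apply (hdel h hh0 H). }
  eapply uniqueness_limite; eauto.
Qed.

Lemma Rpower_mvt (p x y : R) : 0 < y -> y < x ->
  exists c, y < c < x /\ Rpower x p - Rpower y p = p * Rpower c (p - 1) * (x - y).
Proof.
  intros hy hyx.
  destruct (MVT_cor2 (fun t => Rpower t p) (fun t => p * Rpower t (p - 1)) y x hyx)
    as [c [hc1 hc2]].
  { intros c hc. apply derivable_pt_lim_power. lra. }
  exists c. split; [exact hc2|]. simpl in hc1; lra.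
Qed.

Lemma concave_pow (C th x y : R) : 0 < C -> 0 < th <= 1 -> 0 < y -> y <= x ->
  C * Rpower x (th - 1) * (x - y) <= C / th * Rpower x th - C / th * Rpower y th.
Proof.
  intros hC hth hy hyx. destruct (Req_dec x y) as [->|n].
  - replace (y - y) with 0 by ring. lra.
  - destruct (Rpower_mvt th x y hy) as [c [hc E]]; [lra|].
    assert (Rpower x (th - 1) <= Rpower c (th - 1)) by (apply Rpower_base_neg; lra).
    replace (C / th * Rpower x th - C / th * Rpower y th) with (C / th * (Rpower x th - Rpower y th)) by ring.
    rewrite E.
    replace (C / th * (th * Rpower c (th - 1) * (x - y))) with (C * Rpower c (th - 1) * (x - y)) by (field; lra).
    assert (0 <= x - y) by lra.
    assert (C * Rpower x (th - 1) <= C * Rpower c (th - 1)) by (apply Rmult_le_compat_l; lra).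
    nra.
Qed.

Lemma convex_negpow (s x y : R) : 0 < s -> 0 < y -> y <= x ->
  s * Rpower x (- s - 1) * (x - y) <= Rpower y (- s) - Rpower x (- s).
Proof.
  intros hs hy hyx. destruct (Req_dec x y) as [->|n].
  - replace (y - y) with 0 by ring. lra.
  - destruct (Rpower_mvt (-s) x y hy) as [c [hc E]]; [lra|].
    assert (Rpower x (-s - 1) <= Rpower c (-s - 1)) by (apply Rpower_base_neg; lra).
    replace (Rpower y (- s) - Rpower x (- s)) with (- (Rpower x (-s) - Rpower y (-s))) by ring.
    rewrite E. replace (- s - 1) with (-s - 1) by ring.
    assert (0 <= x - y) by lra.
    assert (s * Rpower x (- s - 1) <= s * Rpower c (- s - 1)) by (apply Rmult_le_compat_l; lra).
    nra.
Qed.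

Lemma exp_rate (q B beta : R) : 0 < q -> 0 <= beta <= B ->
  exp (q / (1 + q * B) * beta) <= 1 + q * beta.
Proof.
  intros hq hb.
  set (z := q * beta / (1 + q * beta)).
  assert (h1 : q / (1 + q * B) * beta <= z).
  { unfold z. unfold Rdiv. rewrite Rmult_assoc, (Rmult_comm (/ _)), <- Rmult_assoc.
    apply Rmult_le_compat_l; [nra|]. apply Rinv_le_contravar; nra. }
  assert (h2 : exp z <= 1 + q * beta).
  { pose proof (exp_ineq1_le (- z)) as E.
    assert (Ez : exp z * exp (- z) = 1) by (rewrite <- exp_plus; replace (z + - z) with 0 by ring; apply exp_0).
    assert (1 - z = / (1 + q * beta)) by (unfold z; field; nra).
    assert (0 < exp z) by apply exp_pos.
    assert (exp z * (1 - z) <= 1) by nra.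
    rewrite H in H1. apply Rmult_le_compat_r with (r := 1 + q * beta) in H1; [|nra].
    field_simplify in H1; nra. }
  pose proof (exp_le _ _ h1). lra.
Qed.

Lemma rsum_refl (u : nat -> R) m : rsum u m m = 0.
Proof. destruct m; [reflexivity|]. cbn [rsum]. rewrite (proj2 (Nat.leb_gt (S m) m)); auto; lia. Qed.

Lemma rsum_S (u : nat -> R) m n : (m <= n)%nat -> rsum u m (S n) = rsum u m n + u n.
Proof. intro h. simpl. rewrite (proj2 (Nat.leb_le m n) h). reflexivity. Qed.

Lemma rsum_nonneg (u : nat -> R) m n : (forall j, 0 <= u j) -> 0 <= rsum u m n.
Proof.
  intro hu. induction n; simpl; [lra|]. destruct (Nat.leb m n); [|lra].
  specialize (hu n). lra.
Qed.

Lemma rsum_pos (u : nat -> R) m n : (forall j, 0 < u j) -> (m <= n)%nat -> 0 < rsum u m (S n).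
Proof.
  intros hu h. rewrite rsum_S; auto. pose proof (rsum_nonneg u m n (fun j => Rlt_le _ _ (hu j))).
  specialize (hu n). lra.
Qed.

Lemma dist_sum (H : HilbertSpace) (x : nat -> H) (xs : H) k n :
  hnorm (hsub (x k) xs) <=
  rsum (fun j => hnorm (hsub (x (S j)) (x j))) k (k + n)%nat + hnorm (hsub (x (k + n)%nat) xs).
Proof.
  induction n.
  - rewrite Nat.add_0_r, rsum_refl. lra.
  - replace (k + S n)%nat with (S (k + n)%nat) by lia. rewrite rsum_S by lia.
    pose proof (hdist_triangle H (x (k + n)%nat) (x (S (k + n)%nat)) xs).
    rewrite (hnorm_sub_sym H (x (k + n)%nat) (x (S (k + n)%nat))) in H0. lra.
Qed.

Lemma tail_sum (nd phi : nat -> R) (M : R) k :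
  (1 <= k)%nat ->
  (forall j, (j >= k)%nat -> 2 * nd j <= nd (j - 1)%nat + M * (phi j - phi (S j))) ->
  (forall j, 0 <= nd j) -> (forall j, 0 <= phi j) -> 0 <= M ->
  forall n, rsum nd k (k + n)%nat <= nd (k - 1)%nat + M * phi k.
Proof.
  intros hk hc hnd hphi hM.
  assert (P : forall n, rsum nd k (k + n)%nat + nd (k + n - 1)%nat + M * phi (k + n)%nat
                        <= nd (k - 1)%nat + M * phi k).
  { induction n.
    - rewrite Nat.add_0_r, rsum_refl. lra.
    - replace (k + S n)%nat with (S (k + n)%nat) by lia. rewrite rsum_S by lia.
      replace (S (k + n)%nat - 1)%nat with (k + n)%nat by lia.
      specialize (hc (k + n)%nat ltac:(lia)). lra. }
  intro n. specialize (P n). pose proof (hnd (k + n - 1)%nat). pose proof (hphi (k + n)%nat).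
  assert (0 <= M * phi (k + n)%nat) by (apply Rmult_le_pos; auto). lra.
Qed.

Lemma rate_ii_sum (r beta : nat -> R) (c : R) k0 :
  (forall j, (j >= k0)%nat -> r (S j) <= r j * exp (- c * beta j)) ->
  forall n, r (k0 + n)%nat <= r k0 * exp (- c * rsum beta k0 (k0 + n)%nat).
Proof.
  intros h n. induction n.
  - rewrite Nat.add_0_r, rsum_refl. replace (- c * 0) with 0 by ring. rewrite exp_0. lra.
  - replace (k0 + S n)%nat with (S (k0 + n)%nat) by lia. rewrite rsum_S by lia.
    eapply Rle_trans; [apply h; lia|].
    replace (- c * (rsum beta k0 (k0 + n)%nat + beta (k0 + n)%nat)) with
      (- c * rsum beta k0 (k0 + n)%nat + - c * beta (k0 + n)%nat) by ring.
    rewrite exp_plus, <- Rmult_assoc.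
    apply Rmult_le_compat_r; [left; apply exp_pos|auto].
Qed.

Lemma rate_iii_sum (g beta : nat -> R) (c : R) k0 :
  (forall j, (j >= k0)%nat -> c * beta j <= g (S j) - g j) ->
  forall n, g k0 + c * rsum beta k0 (k0 + n)%nat <= g (k0 + n)%nat.
Proof.
  intros h n. induction n.
  - rewrite Nat.add_0_r, rsum_refl. lra.
  - replace (k0 + S n)%nat with (S (k0 + n)%nat) by lia. rewrite rsum_S by lia.
    specialize (h (k0 + n)%nat ltac:(lia)). lra.
Qed.

Lemma from_eps (D b nd : R) : 0 < D -> 0 < b ->
  (forall eps, eps > 0 -> 1 <= D * (nd / b + eps)) -> b <= D * nd.
Proof.
  intros hD hb h. destruct (Rle_dec b (D * nd)) as [|N]; auto.
  set (eps := (b - D * nd) / (2 * D * b)).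
  assert (he : eps > 0) by (unfold eps; apply Rdiv_lt_0_compat; nra).
  specialize (h eps he). unfold eps in h.
  assert (E : D * (nd / b + (b - D * nd) / (2 * D * b)) = (D * nd + b) / (2 * b)) by (field; lra).
  rewrite E in h. apply Rmult_le_compat_r with (r := 2 * b) in h; [|lra].
  replace ((D * nd + b) / (2 * b) * (2 * b)) with (D * nd + b) in h by (field; lra). lra.
Qed.

Lemma sq_le (u w : R) : 0 <= u -> 0 <= w -> u ^ 2 <= w ^ 2 -> u <= w.
Proof. intros. nra. Qed.

Lemma chain_real (a b D ndi ndj dphi M : R) : 0 < a -> 0 < b -> 0 < D -> 0 <= ndi -> 0 <= ndj ->
  b <= D * ndi -> D * (a * ndj ^ 2) <= dphi -> / (a * b) <= M ->
  2 * ndj <= ndi + M * dphi.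
Proof.
  intros ha hb hD hi hj h1 h2 h3.
  assert (hp : 0 <= dphi) by (assert (0 <= a * ndj ^ 2) by nra; nra).
  assert (h4 : a * b * ndj ^ 2 <= ndi * dphi).
  { apply Rle_trans with (D * ndi * (a * ndj ^ 2)).
    - assert (0 <= a * ndj ^ 2) by nra. nra.
    - nra. }
  assert (h5 : ndj ^ 2 <= M * ndi * dphi).
  { assert (E : ndj ^ 2 = / (a * b) * (a * b * ndj ^ 2)) by (field; lra).
    rewrite E. assert (0 <= ndi * dphi) by nra.
    assert (0 < / (a * b)) by (apply Rinv_0_lt_compat; nra).
    apply Rle_trans with (/ (a * b) * (ndi * dphi)). apply Rmult_le_compat_l; lra.
    nra. }
  assert (hM : 0 < M) by (apply Rlt_le_trans with (/ (a * b)); auto; apply Rinv_0_lt_compat; nra).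
  apply sq_le; [lra| nra |].
  pose proof (pow2_ge_0 (ndi - M * dphi)). nra.
Qed.

Lemma rate_step_real (a b C P Q nd dl m : R) : 0 < a -> 0 < b -> 0 < C -> 0 < P -> 0 < Q ->
  P * P * Q = 1 -> b <= C * P * nd -> a * nd ^ 2 <= dl -> m <= a * b ->
  m / (C ^ 2) * b * Q <= dl.
Proof.
  intros ha hb hC hP hQ hPQ h1 h2 h3.
  assert (hCP : 0 < C * P) by (apply Rmult_lt_0_compat; auto).
  assert (0 <= nd) by nra.
  assert (h4 : b * b <= C * C * P * P * nd ^ 2) by nra.
  assert (h5 : a * b * b * Q <= C * C * a * nd ^ 2).
  { assert (a * Q * (b * b) <= a * Q * (C * C * P * P * nd ^ 2)) by
      (apply Rmult_le_compat_l; nra).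
    replace (a * Q * (C * C * P * P * nd ^ 2)) with (C * C * a * nd ^ 2 * (P * P * Q)) in H0 by ring.
    rewrite hPQ in H0. lra. }
  assert (h6 : m * b * Q <= C * C * dl).
  { apply Rle_trans with (a * b * b * Q). assert (0 <= b * Q) by nra. nra.
    apply Rle_trans with (C * C * (a * nd ^ 2)). lra. apply Rmult_le_compat_l; nra. }
  replace (m / C ^ 2 * b * Q) with ((m * b * Q) / (C * C)) by (field; lra).
  apply Rmult_le_reg_r with (C * C); [nra|].
  replace (m * b * Q / (C * C) * (C * C)) with (m * b * Q) by (field; lra). lra.
Qed.

Lemma iii_step (r0 r1 q beta B s : R) : 0 < r1 -> r1 <= r0 -> r0 <= 1 -> 0 < q ->
  0 < beta -> beta <= B -> 0 < s ->
  q * beta * Rpower r1 (1 + s) <= r0 - r1 ->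
  Rmin (1 / (2 * B)) (s * q * exp (- (1 + s) * ln 2 / s)) * beta
    <= Rpower r1 (- s) - Rpower r0 (- s).
Proof.
  intros h1 h2 h3 hq hb hbB hs hst.
  assert (hB : 0 < B) by lra.
  assert (hBv : 1 <= Rpower r0 (- s)).
  { rewrite <- (Rpower_O r0) by lra. apply Rpower_exp_anti; lra. }
  assert (hmin1 : Rmin (1 / (2 * B)) (s * q * exp (- (1 + s) * ln 2 / s)) <= 1 / (2 * B)) by apply Rmin_l.
  assert (hmin2 : Rmin (1 / (2 * B)) (s * q * exp (- (1 + s) * ln 2 / s)) <= s * q * exp (- (1 + s) * ln 2 / s)) by apply Rmin_r.
  destruct (Rle_dec (2 * Rpower r0 (- s)) (Rpower r1 (- s))) as [CA|CB].
  - apply Rle_trans with (1 / (2 * B) * beta). apply Rmult_le_compat_r; lra.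
    assert (1 / (2 * B) * beta <= 1) .
    { apply Rle_trans with (1 / (2 * B) * B). apply Rmult_le_compat_l; [|lra].
      apply Rlt_le, Rdiv_lt_0_compat; lra. replace (1 / (2 * B) * B) with (1/2) by (field; lra). lra. }
    lra.
  - pose proof (convex_negpow s r0 r1 hs h1 h2) as cv.
    set (L0 := ln r0) in *. set (L1 := ln r1) in *.
    assert (hc : - s * L1 < ln 2 + - s * L0).
    { apply exp_lt_inv. rewrite exp_plus, exp_ln by lra. unfold Rpower in CB. fold L0 L1 in CB. lra. }
    assert (hd : L0 - L1 < ln 2 / s).
    { apply (Rmult_lt_reg_l s); auto. replace (s * (ln 2 / s)) with (ln 2) by (field; lra). lra. }
    assert (hk : exp (- (1 + s) * ln 2 / s) <= Rpower r0 (- s - 1) * Rpower r1 (1 + s)).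
    { unfold Rpower. fold L0 L1. rewrite <- exp_plus. apply exp_le.
      replace (- (1 + s) * ln 2 / s) with ((1 + s) * - (ln 2 / s)) by (field; lra).
      nra. }
    assert (0 < exp (- (1 + s) * ln 2 / s)) by apply exp_pos.
    assert (0 < Rpower r0 (- s - 1)) by apply Rpower_pos'.
    assert (0 < Rpower r1 (1 + s)) by apply Rpower_pos'.
    apply Rle_trans with (s * q * exp (- (1 + s) * ln 2 / s) * beta). apply Rmult_le_compat_r; lra.
    apply Rle_trans with (s * Rpower r0 (- s - 1) * (q * beta * Rpower r1 (1 + s))).
    + replace (s * Rpower r0 (- s - 1) * (q * beta * Rpower r1 (1 + s))) with
        (s * q * beta * (Rpower r0 (- s - 1) * Rpower r1 (1 + s))) by ring.
      replace (s * q * exp (- (1 + s) * ln 2 / s) * beta) with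
        (s * q * beta * exp (- (1 + s) * ln 2 / s)) by ring.
      apply Rmult_le_compat_l; [|lra]. apply Rmult_le_pos; [apply Rmult_le_pos|]; lra.
    + apply Rle_trans with (s * Rpower r0 (- s - 1) * (r0 - r1)); [|lra].
      apply Rmult_le_compat_l; [apply Rmult_le_pos; lra|lra].
Qed.

Lemma Rpower_mult_distr' (x y z : R) : 0 < x -> 0 < y -> Rpower (x * y) z = Rpower x z * Rpower y z.
Proof. intros. unfold Rpower. rewrite ln_mult by lra. rewrite <- exp_plus. f_equal. ring. Qed.

Lemma arch_nat (A d : R) : 0 < d -> exists n : nat, A < INR n * d.
Proof.
  intro hd. destruct (archimed (A / d)) as [h1 _].
  destruct (Z_le_gt_dec (up (A / d)) 0) as [hz|hz].
  - exists 0%nat. simpl. apply IZR_le in hz.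
    assert (A / d < 0) by lra.
    assert (A = A / d * d) by (field; lra). nra.
  - exists (Z.to_nat (up (A / d))). rewrite INR_IZR_INZ, Z2Nat.id by lia.
    assert (A = A / d * d) by (field; lra). nra.
Qed.

Lemma iii_bound (rho S c s : R) : 0 < rho -> 0 < s -> 0 < c -> 0 < S ->
  c * S <= Rpower rho (- s) -> rho <= Rpower c (- (1 / s)) * Rpower S (- (1 / s)).
Proof.
  intros hr hs hc hS h.
  assert (E : rho = Rpower (Rpower rho (- s)) (- (1 / s))).
  { rewrite Rpower_mult. replace (- s * - (1 / s)) with 1 by (field; lra). now rewrite Rpower_1. }
  rewrite E at 1. rewrite <- Rpower_mult_distr' by auto.
  apply Rpower_base_neg; [nra|auto|].
  assert (0 < 1 / s) by (apply Rdiv_lt_0_compat; lra). lra.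
Qed.

Lemma iii_bound_th (rho S c s th : R) : 0 < rho -> 0 < s -> 0 < c -> 0 < S -> 0 < th ->
  c * S <= Rpower rho (- s) -> Rpower rho th <= Rpower c (- (th / s)) * Rpower S (- (th / s)).
Proof.
  intros hr hs hc hS ht h. pose proof (iii_bound rho S c s hr hs hc hS h) as hb.
  apply Rle_trans with (Rpower (Rpower c (- (1 / s)) * Rpower S (- (1 / s))) th).
  - apply Rpower_base_pos; lra.
  - rewrite Rpower_mult_distr' by apply Rpower_pos'. rewrite !Rpower_mult.
    replace (- (1 / s) * th) with (- (th / s)) by (field; lra). lra.
Qed.
Theorem mainTheorem5
  (H : HilbertSpace) (f : H -> ER) (x : nat -> H) (a b : nat -> R)
  (xstar : H) (C theta eta : R)
  (Hproper : proper f) (Hlsc : lsc f)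
  (* H1 *)
  (Ha_pos : forall k, 0 < a k)
  (H1 : forall k, ER_le (ER_addR (f (x (S k))) (a k * (hnorm (hsub (x (S k)) (x k)))^2)) (f (x k)))
  (* H2 with eps_k = 0 *)
  (Hb_pos : forall k, (k >= 1)%nat -> 0 < b k)
  (H2 : forall k, slope_le f (x (S k)) (hnorm (hsub (x (S k)) (x k)) / b (S k)))
  (* H3 *)
  (H3i : exists alow, 0 < alow /\ forall k, alow <= a k)
  (H3ii : ~ exists l, Un_cv (fun n => rsum b 1 n) l)
  (H3iii : exists M, forall k, (k >= 1)%nat -> / (a k * b k) <= M)
  (* f-convergence and KL *)
  (Hfcv : f_converges f x xstar)
  (HC : 0 < C) (Htheta : 0 < theta <= 1) (Heta : 0 < eta)
  (HKL : KL_property f xstar (phi_pow C theta) eta) :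
  forall fs, f xstar = ERfin fs ->
  (* (i) *)
  ((theta = 1 -> (exists m, 0 < m /\ forall k, m <= a k * (b (S k))^2) ->
      exists K, f (x K) = f xstar /\ forall k, (k >= K)%nat -> x k = xstar)
  /\
  (* (ii) *)
  (1/2 <= theta < 1 -> (exists B, forall k, (k >= 1)%nat -> b k <= B) ->
      (exists m, 0 < m /\ forall k, m <= a k * b (S k)) ->
      exists c k0, 0 < c /\
        (exists M K, forall k, (k >= K)%nat -> exists v, f (x k) = ERfin v /\
            Rabs (v - fs) <= M * exp (- c * rsum (fun n => b (S n)) k0 k)) /\
        (exists M K, forall k, (k >= K)%nat ->
            hnorm (hsub xstar (x k)) <= M * exp (- (c / 2) * rsum (fun n => b (S n)) k0 (k - 1))))
  /\
  (* (iii) *)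
  (0 < theta < 1/2 -> (exists B, forall k, (k >= 1)%nat -> b k <= B) ->
      (exists m, 0 < m /\ forall k, m <= a k * b (S k)) ->
      exists k0,
        (exists M K, forall k, (k >= K)%nat -> exists v, f (x k) = ERfin v /\
            Rabs (v - fs) <= M * Rpower (rsum (fun n => b (S n)) k0 k) (- (1 / (1 - 2 * theta)))) /\
        (exists M K, forall k, (k >= K)%nat ->
            hnorm (hsub xstar (x k)) <= M * Rpower (rsum (fun n => b (S n)) k0 (k - 1)) (- (theta / (1 - 2 * theta)))))).
Proof.
  intros fs Hfs.
  destruct Hfcv as [Hxcv [fs' [Hfs' Hfcv']]].
  rewrite Hfs in Hfs'. injection Hfs' as Efs. subst fs'.
  set (fv := fun k => match f (x k) with ERfin v => v | ERinf => 0 end).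
  assert (Ffin : forall k, (k >= 1)%nat -> f (x k) = ERfin (fv k)).
  { intros k hk. destruct k as [|k']; [lia|].
    destruct (H2 k' 1 ltac:(lra)) as [p [Hp _]].
    destruct Hp as [fx [Efx _]]. unfold fv. rewrite Efx. reflexivity. }
  set (nd := fun k => hnorm (hsub (x (S k)) (x k))).
  assert (ndpos : forall k, 0 <= nd k) by (intro k; apply hnorm_nonneg).
  assert (Fdesc : forall k, (k >= 1)%nat -> fv (S k) + a k * nd k ^ 2 <= fv k).
  { intros k hk. specialize (H1 k). rewrite (Ffin (S k)) in H1 by lia.
    rewrite (Ffin k) in H1 by lia. simpl in H1. exact H1. }
  assert (Fcv : forall eps, eps > 0 -> exists N, forall k, (k >= N)%nat -> Rabs (fv k - fs) < eps).
  { intros eps he. destruct (Hfcv' eps he) as [N HN]. exists (max N 1). intros k hk.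
    destruct (HN k ltac:(lia)) as [v [Ev Hv]]. rewrite Ffin in Ev by lia.
    injection Ev as Ev'. rewrite Ev'. exact Hv. }
  assert (Fmono : forall k n, (k >= 1)%nat -> fv (k + n)%nat <= fv k).
  { intros k n hk. induction n. rewrite Nat.add_0_r; lra.
    replace (k + S n)%nat with (S (k + n)) by lia. pose proof (Fdesc (k + n)%nat ltac:(lia)) as h1.
    pose proof (Ha_pos (k + n)%nat) as h2.
    assert (0 <= a (k + n)%nat * nd (k + n)%nat ^ 2) by (apply Rmult_le_pos; [lra| apply pow2_ge_0]).
    lra. }
  assert (Fge : forall k, (k >= 1)%nat -> fs <= fv k).
  { intros k hk. destruct (Rle_dec fs (fv k)) as [|N]; auto. exfalso.
    destruct (Fcv (fs - fv k) ltac:(lra)) as [N0 HN0].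
    specialize (HN0 (k + N0)%nat ltac:(lia)). pose proof (Fmono k N0 hk).
    apply Rabs_def2 in HN0. lra. }
  destruct HKL as [fs0 [Hfs0 [delta [hdelta HKLc]]]].
  rewrite Hfs in Hfs0. injection Hfs0 as E0. subst fs0.
  assert (Reg : exists k1, (k1 >= 1)%nat /\ forall k, (k >= k1)%nat ->
      hnorm (hsub (x k) xstar) < delta /\ fv k - fs < Rmin eta 1).
  { destruct (Hxcv delta hdelta) as [N1 HN1].
    assert (hm : Rmin eta 1 > 0) by (apply Rmin_pos; lra).
    destruct (Fcv _ hm) as [N2 HN2].
    exists (max 1 (max N1 N2)). split; [lia|]. intros k hk. split.
    - apply HN1; lia.
    - specialize (HN2 k ltac:(lia)). apply Rabs_def2 in HN2. lra. }
  destruct Reg as [k1 [hk1 Reg]].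
  assert (Reg_eta : forall k, (k >= k1)%nat -> fv k < fs + eta).
  { intros k hk. pose proof (Rmin_l eta 1). specialize (Reg k hk). lra. }
  assert (Reg_one : forall k, (k >= k1)%nat -> fv k - fs <= 1).
  { intros k hk. pose proof (Rmin_r eta 1). specialize (Reg k hk). lra. }
  destruct (classic (exists K, (K >= 1)%nat /\ fv K = fs)) as [[K [hK EK]] | NE].
  -
    assert (Cst : forall n, fv (K + n)%nat = fs).
    { intro n. pose proof (Fmono K n hK). pose proof (Fge (K + n)%nat ltac:(lia)). lra. }
    assert (Stat : forall n, x (K + n)%nat = x K).
    { induction n. rewrite Nat.add_0_r; auto.
      replace (K + S n)%nat with (S (K + n)) by lia. rewrite <- IHn.
      apply hsub_zero, hnorm_eq0.
      pose proof (Fdesc (K + n)%nat ltac:(lia)) as h1. rewrite (Cst n) in h1.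
      replace (S (K + n)) with (K + S n)%nat in h1 by lia. rewrite (Cst (S n)) in h1.
      pose proof (Ha_pos (K + n)%nat) as h2. pose proof (ndpos (K + n)%nat) as h3.
      change (nd (K + n)%nat = 0).
      assert (hq : nd (K + n)%nat ^ 2 <= 0) by (apply (Rmult_le_reg_l (a (K + n)%nat)); lra).
      apply Rle_antisym; [|lra]. nra. }
    assert (XK : x K = xstar).
    { apply hsub_zero, hnorm_eq0. destruct (Rle_dec (hnorm (hsub (x K) xstar)) 0) as [h|h].
      - pose proof (hnorm_nonneg H (hsub (x K) xstar)); lra.
      - exfalso. destruct (Hxcv (hnorm (hsub (x K) xstar)) ltac:(lra)) as [N HN].
        specialize (HN (K + N)%nat ltac:(lia)). rewrite Stat in HN. lra. }
    assert (XS : forall k, (k >= K)%nat -> x k = xstar).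
    { intros k hk. replace k with (K + (k - K))%nat by lia. rewrite Stat; auto. }
    assert (FS : forall k, (k >= K)%nat -> fv k = fs).
    { intros k hk. replace k with (K + (k - K))%nat by lia. apply Cst. }
    assert (Dz : forall k, (k >= K)%nat -> hnorm (hsub xstar (x k)) = 0).
    { intros k hk. rewrite XS by auto. rewrite hsub_self. apply hnorm_hzero. }
    split; [|split].
    + intros _ _. exists K. split.
      * rewrite Ffin by auto. rewrite EK, Hfs. reflexivity.
      * exact XS.
    + intros _ _ _. exists 1, 0%nat. split; [lra|]. split.
      * exists 0, K. intros k hk. exists (fv k). split. apply Ffin; lia.
        rewrite FS by auto. replace (fs - fs) with 0 by ring. rewrite Rabs_R0. lra.
      * exists 0, K. intros k hk. rewrite Dz by auto. lra.
    + intros _ _ _. exists 0%nat. split.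
      * exists 0, K. intros k hk. exists (fv k). split. apply Ffin; lia.
        rewrite FS by auto. replace (fs - fs) with 0 by ring. rewrite Rabs_R0. lra.
      * exists 0, K. intros k hk. rewrite Dz by auto. lra.
  -
    assert (Rpos : forall k, (k >= 1)%nat -> fs < fv k).
    { intros k hk. destruct (Req_dec (fv k) fs) as [e|e].
      - exfalso; apply NE; exists k; auto.
      - pose proof (Fge k hk); lra. }
    set (r := fun k => fv k - fs).
    assert (rpos : forall k, (k >= 1)%nat -> 0 < r k) by (intros k hk; unfold r; pose proof (Rpos k hk); lra).
    assert (rone : forall k, (k >= k1)%nat -> r k <= 1) by (intros k hk; unfold r; apply Reg_one; auto).
    assert (Rdesc : forall j, (j >= 1)%nat -> a j * nd j ^ 2 <= r j - r (S j)).
    { intros j hj. unfold r. pose proof (Fdesc j hj). lra. }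
    assert (rdec : forall j, (j >= 1)%nat -> r (S j) <= r j).
    { intros j hj. pose proof (Rdesc j hj). pose proof (Ha_pos j).
      assert (0 <= a j * nd j ^ 2) by (apply Rmult_le_pos; [lra|apply pow2_ge_0]). lra. }
    assert (E1 : forall j, (S j >= k1)%nat -> b (S j) <= C * Rpower (r (S j)) (theta - 1) * nd j).
    { intros j hj. destruct (Reg (S j) hj) as [R1 R2].
      destruct (HKLc (x (S j)) (fv (S j)) R1 (Ffin (S j) ltac:(lia)) (Rpos (S j) ltac:(lia))
                 (Reg_eta (S j) hj)) as [d [Hd Hdp]].
      apply phi_deriv_id in Hd; [|pose proof (Rpos (S j) ltac:(lia)); lra].
      assert (Ed : d = C * Rpower (r (S j)) (theta - 1)) by (rewrite Hd; unfold r; field; lra).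
      assert (hD : 0 < C * Rpower (r (S j)) (theta - 1)) by (apply Rmult_lt_0_compat; [lra|apply Rpower_pos']).
      apply from_eps; auto. apply Hb_pos; lia.
      intros eps he. destruct (H2 j eps he) as [p [Hp Hpn]].
      specialize (Hdp p Hp). rewrite Ed in Hdp.
      apply Rle_trans with (C * Rpower (r (S j)) (theta - 1) * hnorm p); auto.
      apply Rmult_le_compat_l; [lra|]. exact Hpn. }
    destruct H3i as [alow [halow Hal]].
    destruct H3iii as [M' HM'].
    assert (hM' : 0 < M').
    { apply Rlt_le_trans with (/ (a 1%nat * b 1%nat)); [|apply HM'; lia].
      apply Rinv_0_lt_compat, Rmult_lt_0_compat; [apply Ha_pos|apply Hb_pos; lia]. }
    set (phi := fun j => C / theta * Rpower (r j) theta).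
    assert (phipos : forall j, 0 <= phi j).
    { intro j. unfold phi. apply Rmult_le_pos; [apply Rlt_le, Rdiv_lt_0_compat; lra|apply Rlt_le, Rpower_pos']. }
    assert (Chain : forall j, (j >= k1)%nat -> 2 * nd j <= nd (j - 1)%nat + M' * (phi j - phi (S j))).
    { intros j hj. destruct j as [|i]; [lia|]. replace (S i - 1)%nat with i by lia.
      apply (chain_real (a (S i)) (b (S i)) (C * Rpower (r (S i)) (theta - 1))).
      - apply Ha_pos.
      - apply Hb_pos; lia.
      - apply Rmult_lt_0_compat; [lra|apply Rpower_pos'].
      - apply ndpos.
      - apply ndpos.
      - apply E1; lia.
      - pose proof (concave_pow C theta (r (S i)) (r (S (S i))) HC Htheta (rpos (S (S i)) ltac:(lia)) (rdec (S i) ltac:(lia))) as cc.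
        pose proof (Rdesc (S i) ltac:(lia)) as rd.
        unfold phi. apply Rle_trans with (C * Rpower (r (S i)) (theta - 1) * (r (S i) - r (S (S i)))); [|exact cc].
        apply Rmult_le_compat_l; [apply Rlt_le, Rmult_lt_0_compat; [lra|apply Rpower_pos']|exact rd].
      - apply HM'; lia. }
    assert (Dist : forall k, (k >= k1)%nat -> hnorm (hsub xstar (x k)) <= nd (k - 1)%nat + M' * phi k).
    { intros k hk. pose proof (tail_sum nd phi M' k ltac:(lia) (fun j hj => Chain j ltac:(lia)) ndpos phipos (Rlt_le _ _ hM')) as TS.
      rewrite hnorm_sub_sym. apply Rle_plus_epsilon. intros eps he.
      destruct (Hxcv eps he) as [N HN].
      pose proof (dist_sum H x xstar k N) as DS.
      change (rsum (fun j => hnorm (hsub (x (S j)) (x j))) k (k + N)%nat) with (rsum nd k (k + N)%nat) in DS.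
      specialize (TS N). specialize (HN (k + N)%nat ltac:(lia)). lra. }
    assert (Step : forall m, (forall k, m <= a k * b (S k)) -> forall j, (j >= k1)%nat ->
              m / (C ^ 2) * b (S j) * Rpower (r (S j)) (2 - 2 * theta) <= r j - r (S j)).
    { intros m Hm j hj.
      apply (rate_step_real (a j) (b (S j)) C (Rpower (r (S j)) (theta - 1)) (Rpower (r (S j)) (2 - 2 * theta)) (nd j)).
      all: first [apply Ha_pos | apply HC | apply Hm | apply Rpower_pos' | (apply Hb_pos; lia) | (apply E1; lia) | (apply Rdesc; lia)
                 | (unfold Rpower; rewrite <- !exp_plus; transitivity (exp 0); [f_equal; ring|apply exp_0])]. }
    split; [|split].
    +
      intros Hth1 [m [hm Hm]]. exfalso.
      assert (St : forall j, (j >= k1)%nat -> m / C ^ 2 <= r j - r (S j)).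
      { intros j hj. pose proof (E1 j ltac:(lia)) as e1. rewrite Hth1 in e1.
        replace (1 - 1) with 0 in e1 by ring. rewrite Rpower_O in e1 by (apply rpos; lia).
        pose proof (Rdesc j ltac:(lia)) as rd. pose proof (Hm j) as hmj. pose proof (Ha_pos j) as haj.
        pose proof (Hb_pos (S j) ltac:(lia)) as hbj.
        assert (b (S j) ^ 2 <= C ^ 2 * nd j ^ 2) by nra.
        assert (m <= C ^ 2 * (r j - r (S j))) by nra.
        apply (Rmult_le_reg_r (C ^ 2)); [nra|].
        replace (m / C ^ 2 * C ^ 2) with m by (field; lra). lra. }
      assert (Lin : forall n, r (k1 + n)%nat <= r k1 - INR n * (m / C ^ 2)).
      { induction n. rewrite Nat.add_0_r. simpl. lra.
        replace (k1 + S n)%nat with (S (k1 + n)) by lia. rewrite S_INR.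
        pose proof (St (k1 + n)%nat ltac:(lia)). lra. }
      assert (hd : 0 < m / C ^ 2) by (apply Rdiv_lt_0_compat; nra).
      destruct (arch_nat (r k1) (m / C ^ 2) hd) as [n hn].
      specialize (Lin n). pose proof (rpos (k1 + n)%nat ltac:(lia)). lra.
    + intros Hth [B HB] [m [hm Hm]].
      assert (hB : 0 < B) by (pose proof (HB 1%nat ltac:(lia)); pose proof (Hb_pos 1%nat ltac:(lia)); lra).
      set (q := m / C ^ 2).
      assert (hq : 0 < q) by (unfold q; apply Rdiv_lt_0_compat; nra).
      set (c := q / (1 + q * B)).
      assert (hc : 0 < c) by (unfold c; apply Rdiv_lt_0_compat; nra).
      assert (Rec : forall j, (j >= k1)%nat -> r (S j) <= r j * exp (- c * b (S j))).
      { intros j hj. pose proof (Step m Hm j hj) as st. fold q in st.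
        assert (hR : r (S j) <= Rpower (r (S j)) (2 - 2 * theta)).
        { rewrite <- (Rpower_1 (r (S j))) at 1 by (apply rpos; lia).
          apply Rpower_exp_anti; [apply rpos; lia| apply rone; lia | lra]. }
        pose proof (Hb_pos (S j) ltac:(lia)) as hb. pose proof (HB (S j) ltac:(lia)) as hbB.
        pose proof (exp_rate q B (b (S j)) hq ltac:(lra)) as er. fold c in er.
        pose proof (rpos (S j) ltac:(lia)) as r1.
        assert (h1 : r (S j) * (1 + q * b (S j)) <= r j).
        { assert (q * b (S j) * r (S j) <= q * b (S j) * Rpower (r (S j)) (2 - 2 * theta)) by (apply Rmult_le_compat_l; nra). lra. }
        assert (h2 : r (S j) * exp (c * b (S j)) <= r j) by nra.
        assert (Ee : exp (c * b (S j)) * exp (- c * b (S j)) = 1) by (rewrite <- exp_plus; replace (c * b (S j) + - c * b (S j)) with 0 by ring; apply exp_0).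
        pose proof (exp_pos (- c * b (S j))).
        replace (r (S j)) with (r (S j) * exp (c * b (S j)) * exp (- c * b (S j))) by (rewrite Rmult_assoc, Ee; ring).
        apply Rmult_le_compat_r; lra. }
      pose proof (rate_ii_sum r (fun n => b (S n)) c k1 Rec) as RII.
      exists c, k1. split; [exact hc|]. split.
      * exists (r k1), k1. intros k hk. exists (fv k). split; [apply Ffin; lia|].
        rewrite Rabs_pos_eq by (pose proof (Rpos k ltac:(lia)); lra).
        specialize (RII (k - k1)%nat). replace (k1 + (k - k1))%nat with k in RII by lia. exact RII.
      * set (R0 := r k1).
        assert (hR0 : 0 < R0) by (apply rpos; lia).
        exists ((R0 / alow + 1) + M' * (C / theta) * (R0 + 1)), (S k1). intros k hk.
        set (i := (k - 1)%nat).
        set (E := exp (- (c / 2) * rsum (fun n => b (S n)) k1 i)).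
        assert (hE : 0 < E) by apply exp_pos.
        assert (EE : exp (- c * rsum (fun n => b (S n)) k1 i) = E * E) by (unfold E; rewrite <- exp_plus; f_equal; field).
        assert (ri : r i <= R0 * (E * E)).
        { rewrite <- EE. specialize (RII (i - k1)%nat). replace (k1 + (i - k1))%nat with i in RII by (unfold i; lia). exact RII. }
        pose proof (Dist k ltac:(lia)) as D0. fold i in D0.
        assert (hi1 : (i >= 1)%nat) by (unfold i; lia).
        assert (Ek : k = S i) by (unfold i; lia).
        assert (nd2 : alow * nd i ^ 2 <= r i).
        { pose proof (Rdesc i hi1). pose proof (Hal i). pose proof (rpos (S i) ltac:(lia)).
          assert (alow * nd i ^ 2 <= a i * nd i ^ 2) by (apply Rmult_le_compat_r; [apply pow2_ge_0|auto]). lra. }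
        set (t := R0 / alow).
        assert (ht : 0 < t) by (unfold t; apply Rdiv_lt_0_compat; lra).
        assert (ndb : nd i <= (t + 1) * E).
        { assert (n2 : nd i ^ 2 <= t * (E * E)).
          { apply (Rmult_le_reg_l alow); [lra|].
            replace (alow * (t * (E * E))) with (R0 * (E * E)) by (unfold t; field; lra). lra. }
          apply sq_le; [apply ndpos| nra |]. nra. }
        assert (rki : r k <= r i) by (rewrite Ek; apply rdec; auto).
        set (P := Rpower (r i) theta).
        assert (hP : 0 < P) by apply Rpower_pos'.
        assert (rP : P ^ 2 <= r i).
        { unfold P. replace (Rpower (r i) theta ^ 2) with (Rpower (r i) (theta + theta)) by (rewrite Rpower_plus; ring).
          rewrite <- (Rpower_1 (r i)) at 2 by (apply rpos; lia).
          apply Rpower_exp_anti; [apply rpos; lia|apply rone; lia|lra]. }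
        assert (Pb : P <= (R0 + 1) * E) by (apply sq_le; nra).
        assert (phb : phi k <= C / theta * P).
        { unfold phi, P. apply Rmult_le_compat_l; [apply Rlt_le, Rdiv_lt_0_compat; lra|].
          apply Rpower_base_pos; [apply rpos; lia|auto|lra]. }
        assert (hCt : 0 < C / theta) by (apply Rdiv_lt_0_compat; lra).
        assert (M' * phi k <= M' * (C / theta) * (R0 + 1) * E).
        { apply Rle_trans with (M' * (C / theta * P)). apply Rmult_le_compat_l; lra.
          replace (M' * (C / theta) * (R0 + 1) * E) with (M' * (C / theta) * ((R0 + 1) * E)) by ring.
          rewrite <- Rmult_assoc. apply Rmult_le_compat_l; [nra|lra]. }
        fold t. lra.
    + intros Hth [B HB] [m [hm Hm]].
      assert (hB : 0 < B) by (pose proof (HB 1%nat ltac:(lia)); pose proof (Hb_pos 1%nat ltac:(lia)); lra).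
      set (q := m / C ^ 2).
      assert (hq : 0 < q) by (unfold q; apply Rdiv_lt_0_compat; nra).
      set (s := 1 - 2 * theta). assert (hs : 0 < s) by (unfold s; lra).
      set (c' := Rmin (1 / (2 * B)) (s * q * exp (- (1 + s) * ln 2 / s))).
      assert (hc' : 0 < c').
      { unfold c'. apply Rmin_pos; [apply Rdiv_lt_0_compat; lra|].
        apply Rmult_lt_0_compat; [nra|apply exp_pos]. }
      set (g := fun j => Rpower (r j) (- s)).
      assert (Rec : forall j, (j >= k1)%nat -> c' * b (S j) <= g (S j) - g j).
      { intros j hj. pose proof (Step m Hm j hj) as st. fold q in st.
        replace (2 - 2 * theta) with (1 + s) in st by (unfold s; ring).
        unfold g, c'. apply iii_step; auto.
        all: first [ (apply rpos; lia) | (apply rdec; lia) | (apply rone; lia) | (apply Hb_pos; lia) | (apply HB; lia) ]. }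
      pose proof (rate_iii_sum g (fun n => b (S n)) c' k1 Rec) as RIII.
      assert (Spos : forall k, (k >= S k1)%nat -> 0 < rsum (fun n => b (S n)) k1 k).
      { intros k hk. replace k with (S (k - 1)) by lia. apply rsum_pos; [|lia].
        intro j; simpl; apply Hb_pos; lia. }
      assert (Gb : forall k, (k >= S k1)%nat -> c' * rsum (fun n => b (S n)) k1 k <= Rpower (r k) (- s)).
      { intros k hk. specialize (RIII (k - k1)%nat). replace (k1 + (k - k1))%nat with k in RIII by lia.
        assert (0 < g k1) by apply Rpower_pos'. unfold g in *. lra. }
      exists k1. split.
      * exists (Rpower c' (- (1 / s))), (S k1). intros k hk. exists (fv k). split; [apply Ffin; lia|].
        rewrite Rabs_pos_eq by (pose proof (Rpos k ltac:(lia)); lra).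
        apply (iii_bound (r k)); auto. apply rpos; lia.
      * set (al := 1 / alow + 1).
        assert (hal : 0 < al) by (unfold al; assert (0 < 1 / alow) by (apply Rdiv_lt_0_compat; lra); lra).
        exists ((al + M' * (C / theta)) * Rpower c' (- (theta / s))), (S (S k1)). intros k hk.
        set (i := (k - 1)%nat).
        assert (hi : (i >= S k1)%nat) by (unfold i; lia).
        assert (Ek : k = S i) by (unfold i; lia).
        pose proof (Dist k ltac:(lia)) as D0. fold i in D0.
        assert (nd2 : alow * nd i ^ 2 <= r i).
        { pose proof (Rdesc i ltac:(lia)). pose proof (Hal i). pose proof (rpos (S i) ltac:(lia)).
          assert (alow * nd i ^ 2 <= a i * nd i ^ 2) by (apply Rmult_le_compat_r; [apply pow2_ge_0|auto]). lra. }
        set (P := Rpower (r i) theta).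
        assert (hP : 0 < P) by apply Rpower_pos'.
        assert (rP : r i <= P ^ 2).
        { unfold P. replace (Rpower (r i) theta ^ 2) with (Rpower (r i) (theta + theta)) by (rewrite Rpower_plus; ring).
          rewrite <- (Rpower_1 (r i)) at 1 by (apply rpos; lia).
          apply Rpower_exp_anti; [apply rpos; lia|apply rone; lia|lra]. }
        assert (ndb : nd i <= al * P).
        { assert (n2 : nd i ^ 2 <= / alow * P ^ 2).
          { apply (Rmult_le_reg_l alow); [lra|].
            replace (alow * (/ alow * P ^ 2)) with (P ^ 2) by (field; lra). lra. }
          assert (hal2 : / alow <= al ^ 2).
          { unfold al. replace (1 / alow) with (/ alow) by (field; lra).
            assert (0 < / alow) by (apply Rinv_0_lt_compat; lra). nra. }
          apply sq_le; [apply ndpos| nra |].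
          apply Rle_trans with (/ alow * P ^ 2); auto.
          replace ((al * P) ^ 2) with (al ^ 2 * P ^ 2) by ring.
          apply Rmult_le_compat_r; [nra|auto]. }
        assert (rki : r k <= r i) by (rewrite Ek; apply rdec; lia).
        assert (phb : phi k <= C / theta * P).
        { unfold phi, P. apply Rmult_le_compat_l; [apply Rlt_le, Rdiv_lt_0_compat; lra|].
          apply Rpower_base_pos; [apply rpos; lia|auto|lra]. }
        assert (Pb : P <= Rpower c' (- (theta / s)) * Rpower (rsum (fun n => b (S n)) k1 i) (- (theta / s))).
        { unfold P. apply iii_bound_th; auto; try lra. apply rpos; lia. }
        assert (hCt : 0 < C / theta) by (apply Rdiv_lt_0_compat; lra).
        assert (T : nd i + M' * phi k <= (al + M' * (C / theta)) * P).
        { assert (M' * phi k <= M' * (C / theta * P)) by (apply Rmult_le_compat_l; lra). nra. }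
        apply Rle_trans with ((al + M' * (C / theta)) * P); [lra|].
        rewrite Rmult_assoc. apply Rmult_le_compat_l; [nra|exact Pb].
Qed.
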